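(* Fix a target task and the data below. For a source task $(\mu,f)\in\mathcal{P}(\mathcal{X}_S)\times A_S$ define its transfer risk $$\mathcal{C}(\mu,f):=\inf_{T_0^X\in\mathbb{T}_0^X,\;T_0^Y\in\mathbb{T}_0^Y} C\Big(\mathcal{E}^O\big(T_0^Y(\cdot,f(T_0^X(\cdot)))\big),\;D\big(T_0^X\#\mathrm{Law}(X_T),\mu\big)\Big).$$ Then for every fixed $f\in A_S$, the map $\mu\mapsto\mathcal{C}(\mu,f)$ is continuous on the metric space $(\mathcal{P}(\mathcal{X}_S),D)$.
   Context: $(\mathcal{X}_T,\|\cdot\|_{\mathcal{X}_T})$, $(\mathcal{Y}_T,\|\cdot\|_{\mathcal{Y}_T})$, $(\mathcal{X}_S,\|\cdot\|_{\mathcal{X}_S})$, $(\mathcal{Y}_S,\|\cdot\|_{\mathcal{Y}_S})$ are Banach spaces (target/source input and output spaces); $X_T$ is an $\mathcal{X}_T$-valued random variable (target input). $A_S$ is a set of functions $\mathcal{X}_S\to\mathcal{Y}_S$ (admissible pretrained source models) and $A_T$ a set of functions $\mathcal{X}_T\to\mathcal{Y}_T$. $\mathbb{T}_0^X$ is a nonempty set of maps $\mathcal{X}_T\to\mathcal{X}_S$ (initial input transports) and $\mathbb{T}_0^Y$ a nonempty set of maps $\mathcal{X}_T\times\mathcal{Y}_S\to\mathcal{Y}_T$ (initial output transports) such that every intermediate model $x\mapsto T_0^Y(x,f(T_0^X(x)))$ with $f\in A_S$ lies in $A_T$. $\mathcal{E}^O:A_T\to[0,\infty)$ is an output transport risk.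 $D$ is a metric on the set $\mathcal{P}(\mathcal{X}_S)$ of probability measures on $\mathcal{X}_S$; the input transport risk of $T_0^X$ for source input law $\mu$ is $D(T_0^X\#\mathrm{Law}(X_T),\mu)$, where $\#$ denotes pushforward. $C:\mathbb{R}\times\mathbb{R}\to\mathbb{R}$ satisfies $C(0,0)=0$, is non-decreasing in each argument when the other is fixed, and there is $L>0$ with $|C(a,b)-C(a',b')|\le L(|a-a'|+|b-b'|)$ for all $a,a',b,b'\ge 0$. *)

(* Defs.v *)
From HB Require Import structures.
From mathcomp Require Import all_boot all_order all_algebra.
From mathcomp Require Import all_classical all_reals all_analysis.
Set Implicit Arguments. Unset Strict Implicit. Unset Printing Implicit Defensive.
Import Order.TTheory GRing.Theory Num.Theory.
Import numFieldNormedType.Exports.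
Local Open Scope classical_set_scope.
Local Open Scope ring_scope.

Notation borel V := (g_sigma_algebraType (@open V)).

Notation Prob R V := (probability (borel V) R).

Definition transfer_risk (R : realType)
  (XT XS YT YS : completeNormedModType R)
  (Law : Prob R XT)
  (TX : set {mfun borel XT >-> borel XS})
  (TY : set (XT -> YS -> YT))
  (EO : (XT -> YT) -> R)
  (D : Prob R XS -> Prob R XS -> R)
  (C : R -> R -> R)
  (mu : Prob R XS) (f : XS -> YS) : R :=
  inf [set r : R | exists T0X, exists T0Y, TX T0X /\ TY T0Y /\
        r = C (EO (fun x => T0Y x (f (T0X x))))
              (D (distribution Law T0X) mu)].

(* Main.v *)
Require Import Defs.
From HB Require Import structures.
From mathcomp Require Import all_boot all_order all_algebra.
From mathcomp Require Import all_classical all_reals all_analysis.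
From mathcomp Require Import ring lra.
Import Order.TTheory GRing.Theory Num.Theory.
Import numFieldNormedType.Exports.
Local Open Scope classical_set_scope.
Local Open Scope ring_scope.

Lemma h2aux (R : realFieldType) (p q d : R) :
  q <= p + d -> p <= q + d -> `|q - p| <= d.
Proof. move=> h1 h2; rewrite ler_norml; apply/andP; split; lra. Qed.

Lemma finaux (R : realFieldType) (x y c e : R) :
  x - c <= y -> y - c <= x -> c < e -> `|y - x| < e.
Proof. move=> h1 h2 h3; rewrite ltr_norml; apply/andP; split; lra. Qed.

Lemma subaux (R : realFieldType) (x y z : R) : x - y <= z -> x <= y + z.
Proof. move=> h; lra. Qed.

Lemma hdaux (R : realFieldType) (L d e : R) : 0 < L -> 0 < e ->
  d < e / (2 * L) -> L * d < e.
Proof.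
move=> L0 e0 h.
have : L * d < L * (e / (2 * L)) by rewrite ltr_pM2l.
have -> : L * (e / (2 * L)) = e / 2.
  by field; rewrite gt_eqF.
move=> h'; lra.
Qed.

Lemma inf_shift (R : realType) (S1 S2 : set R) (c : R) :
  S1 !=set0 -> (forall x, S2 x -> 0 <= x) ->
  (forall x, S1 x -> exists2 y, S2 y & y <= x + c) ->
  inf S2 - c <= inf S1.
Proof.
move=> ne1 lb2 H; apply: lb_le_inf => // x /H [y S2y yle].
have : inf S2 <= y.
  by apply: (ge_inf (E := S2)) => //; exists 0 => z /lb2.
move=> h; rewrite lerBlDr; exact: le_trans h yle.
Qed.

Theorem proposition6 (R : realType)
  (XT XS YT YS : completeNormedModType R)
  (dO : measure_display) (Omega : measurableType dO) (P : probability Omega R)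
  (X_T : {mfun Omega >-> borel XT})
  (AS : set (XS -> YS)) (AT : set (XT -> YT))
  (TX : set {mfun borel XT >-> borel XS})
  (TY : set (XT -> YS -> YT))
  (TX_ne : TX !=set0) (TY_ne : TY !=set0)
  (hA : forall T0X T0Y f, TX T0X -> TY T0Y -> AS f ->
          AT (fun x => T0Y x (f (T0X x))))
  (EO : (XT -> YT) -> R) (EO_ge0 : forall g, AT g -> 0 <= EO g)
  (D : Prob R XS -> Prob R XS -> R)
  (D_ge0 : forall mu nu, 0 <= D mu nu)
  (D_sep : forall mu nu, D mu nu = 0 <-> mu = nu)
  (D_sym : forall mu nu, D mu nu = D nu mu)
  (D_tri : forall mu nu rho, D mu rho <= D mu nu + D nu rho)
  (C : R -> R -> R)
  (C00 : C 0 0 = 0)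
  (C_mono1 : forall a a' b, a <= a' -> C a b <= C a' b)
  (C_mono2 : forall a b b', b <= b' -> C a b <= C a b')
  (L : R) (L_gt0 : 0 < L)
  (C_lip : forall a a' b b', 0 <= a -> 0 <= a' -> 0 <= b -> 0 <= b' ->
     `|C a b - C a' b'| <= L * (`|a - a'| + `|b - b'|)) :
  forall f, AS f ->
  forall (mu : Prob R XS) (eps : R), 0 < eps ->
  exists2 delta : R, 0 < delta &
    forall nu : Prob R XS, D nu mu < delta ->
      `|transfer_risk (distribution P X_T) TX TY EO D C nu f
        - transfer_risk (distribution P X_T) TX TY EO D C mu f| < eps.
Proof.
move=> f Af mu eps eps0.
exists (eps / (2 * L)); first by rewrite divr_gt0 // mulr_gt0.
move=> nu Dnu.
set Law := distribution P X_T.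
pose S (m : Prob R XS) := [set r : R | exists T0X, exists T0Y, TX T0X /\ TY T0Y /\
        r = C (EO (fun x => T0Y x (f (T0X x)))) (D (distribution Law T0X) m)].
have Cge0 : forall a b, 0 <= a -> 0 <= b -> 0 <= C a b.
  move=> a b a0 b0; rewrite -C00; apply: le_trans (C_mono1 _ _ _ a0).
  exact: C_mono2.
have Sge0 : forall m x, S m x -> 0 <= x.
  move=> m x [T0X [T0Y [tx [ty ->]]]]; apply: Cge0 => //.
  by apply: EO_ge0; exact: (hA _ _ _ tx ty Af).
have Sne : forall m, S m !=set0.
  move=> m; case: TX_ne => a ta; case: TY_ne => b tb.
  by eexists; exists a, b; split; [|split].
have key : forall m m', forall x, S m x ->
    exists2 y, S m' y & y <= x + L * D m m'.
  move=> m m' x [T0X [T0Y [tx [ty ->]]]].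
  eexists; first by exists T0X, T0Y; split; [|split].
  set a := EO _; set pi := distribution Law T0X.
  have a0 : 0 <= a by by apply: EO_ge0; exact: (hA _ _ _ tx ty Af).
  have := C_lip a a (D pi m') (D pi m) a0 a0 (D_ge0 _ _) (D_ge0 _ _).
  rewrite subrr normr0 add0r => h.
  have h2 : `|D pi m' - D pi m| <= D m m'.
    have t1 := D_tri pi m m'. have t2 := D_tri pi m' m.
    rewrite (D_sym m' m) in t2.
    exact: h2aux.
  have h3 : C a (D pi m') - C a (D pi m) <= L * D m m'.
    apply: le_trans (ler_norm _) _; apply: le_trans h _.
    by rewrite ler_pM2l.
  exact: subaux.
have e1 := @inf_shift R _ _ _ (Sne mu) (Sge0 nu) (key mu nu).
have e2 := @inf_shift R _ _ _ (Sne nu) (Sge0 mu) (key nu mu).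
rewrite /transfer_risk -/Law.
change (`|inf (S nu) - inf (S mu)| < eps).
have hd : L * D nu mu < eps by exact: hdaux.
rewrite (D_sym mu nu) in e1.
exact: finaux e2 e1 hd.
Qed.
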